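(* Let $N$ be a well-formed system (coherent and $\vdash N:\mathbf{ok}$) in the calculus with DFA entry policies. If $N\to N'$, then $N'$ is well-formed; in particular $\vdash N':\mathbf{ok}$.
   Context: Fix disjoint sets $\mathsf{Act}$ (actions) and $\mathsf{Loc}$ (localities). A policy is a minimal DFA $A=(S,\Sigma,s_0,F,\delta)$ with finite $\Sigma\subseteq\mathsf{Act}\cup\mathsf{Loc}$, $\emptyset\ne F\subseteq S$, $\delta:S\times\Sigma\to S$. $Acp_s(A)$ is the set of words in $\Sigma^*$ leading from $s$ to a final state, $Acp(A)=Acp_{s_0}(A)$, and $A_1\ \mathtt{enforces}\ A_2$ iff $Acp(A_1)\subseteq Acp(A_2)$. Agents: $P ::= \mathbf{nil} \mid a.P \mid \mathbf{go}_A\, l.P \mid P\,|\,Q \mid\ !P$. Concurrent regular expressions $e::=\epsilon\mid\alpha\mid e_1.e_2\mid e_1\odot e_2\mid e^{\otimes}$ with $lang(\epsilon)=\{\epsilon\}$, $lang(\alpha)=\{\alpha\}$, $lang(e_1.e_2)=\{x_1x_2: x_i\in lang(e_i)\}$, $lang(e_1\odot e_2)=\{x_1y_1\cdots x_ny_n : x_1\cdots x_n\in lang(e_1), y_1\cdots y_n\in lang(e_2)\}$ (components may be empty), $lang(e^\otimes)=\bigcup_{i\ge0}L^{\otimes i}$ with $L=lang(e)$, $L^{\otimes0}=\{\epsilon\}$, $L^{\otimes i}=L^{\otimes(i-1)}\odot L$. $\mathrm{CRE}(\mathbf{nil})=\epsilon$, $\mathrm{CRE}(a.P)=a.\mathrm{CRE}(P)$,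 $\mathrm{CRE}(\mathbf{go}_A\,l.P)=l$, $\mathrm{CRE}(P_1|P_2)=\mathrm{CRE}(P_1)\odot\mathrm{CRE}(P_2)$, $\mathrm{CRE}(!P)=\mathrm{CRE}(P)^\otimes$. $\vdash P:A$ iff $lang(\mathrm{CRE}(P))\subseteq Acp(A)$ and $\vdash Q:A'$ for every subterm $\mathbf{go}_{A'}\,l.Q$ of $P$. Systems: $N ::= \mathbf{0} \mid l[\![M \rhd P]\!] \mid N_1\parallel N_2$, site names pairwise distinct; membrane $M=(M_t,M_p)$, $M_t$ a partial function $\mathsf{Loc}\to\{\mathtt{loc},\mathtt{lgood},\mathtt{lbad}\}$, $M_p$ a policy. Structural equivalence: least congruence such that inside a site $|$ is commutative, associative with unit $\mathbf{nil}$, $l[\![M\rhd\ !P|Q]\!]\equiv l[\![M\rhd P|!P|Q]\!]$, and $\parallel$ commutative, associative with unit $\mathbf{0}$. Reduction: (act) $l[\![M\rhd a.P|Q]\!]\to l[\![M\rhd P|Q]\!]$; (par) $N_1\to N_1'$ implies $N_1\parallel N_2\to N_1'\parallel N_2$; (struct) $N\equiv N_1\to N_1'\equiv N'$ implies $N\to N'$; (mig) $k[\![M^k\rhd\mathbf{go}_A\,l.P|Q]\!]\parallel l[\![M^l\rhd R]\!]\to k[\![M^k\rhd Q]\!]\parallel l[\![M^l\rhd P|R]\!]$ provided: if $M^l_t(k)=\mathtt{lgood}$ then $Acp(A)\subseteq Acp(M^l_p)$, else $\vdash P:M^l_p$. Trust order $<:$ reflexive with $\mathtt{loc}<:\mathtt{lbad}$,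 $\mathtt{loc}<:\mathtt{lgood}$; $k$ trustworthy iff $M^k_t(k)=\mathtt{lgood}$; $N$ coherent iff for every trustworthy $k$ and site $l$ with $M^k_t(l)$ defined, $M^k_t(l)<:M^l_t(l)$. A thread is an agent not of the form $P_1|P_2$. $\vdash N:\mathbf{ok}$: $\vdash\mathbf{0}:\mathbf{ok}$; $\vdash N_1\parallel N_2:\mathbf{ok}$ if both are; $\vdash l[\![M\rhd P_1|\dots|P_n]\!]:\mathbf{ok}$ if $l$ is trustworthy and each $P_i$ is a thread such that there is a state $s$ of $M_p$ with $lang(\mathrm{CRE}(P_i))\subseteq Acp_s(M_p)$, and moreover $\vdash Q:A'$ for every subterm $\mathbf{go}_{A'}\,h.Q$ of $P_i$; $\vdash l[\![M\rhd P]\!]:\mathbf{ok}$ if $l$ not trustworthy. *)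

(* Defs.v *)
From mathcomp Require Import all_boot.
From Stdlib Require List.

Set Implicit Arguments.
Unset Strict Implicit.
Unset Printing Implicit Defensive.

Section Calculus.

(* The two disjoint sets of actions and localities; disjointness is
   built in by taking the alphabet of symbols to be their disjoint sum. *)
Variables Act Loc : Type.

Definition sym := (Act + Loc)%type.
Definition word := list sym.

Record dfa := Dfa {
  dstate : finType;
  dalph  : seq sym;
  dstart : dstate;
  dfinal : pred dstate;
  dtrans : dstate -> sym -> dstate  (* delta (only its values on Sigma matter) *)
}.

Definition over_alph (A : dfa) (w : word) : Prop :=
  forall x, List.In x w -> List.In x (dalph A).

Definition Acp_s (A : dfa) (s : dstate A) (w : word) : Prop :=
  over_alph A w /\ @dfinal A (foldl (@dtrans A) s w).

Definition Acp (A : dfa) (w : word) : Prop := Acp_s (dstart A) w.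

Definition dfa_minimal (A : dfa) : Prop :=
  (forall s : dstate A, exists w, over_alph A w /\ foldl (@dtrans A) (dstart A) w = s)
  /\ (forall s t : dstate A, (forall w, Acp_s s w <-> Acp_s t w) -> s = t).

Definition is_policy (A : dfa) : Prop :=
  (exists s : dstate A, @dfinal A s) /\ dfa_minimal A.

Definition enforces (A1 A2 : dfa) : Prop := forall w, Acp A1 w -> Acp A2 w.

Inductive proc :=
  | pnil : proc
  | pact : Act -> proc -> proc
  | pgo  : dfa -> Loc -> proc -> proc
  | ppar : proc -> proc -> proc
  | pbang : proc -> proc.

Inductive subterm (Q : proc) : proc -> Prop :=
  | sub_refl : subterm Q Q
  | sub_act a P : subterm Q P -> subterm Q (pact a P)
  | sub_go A l P : subterm Q P -> subterm Q (pgo A l P)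
  | sub_parl P1 P2 : subterm Q P1 -> subterm Q (ppar P1 P2)
  | sub_parr P1 P2 : subterm Q P2 -> subterm Q (ppar P1 P2)
  | sub_bang P : subterm Q P -> subterm Q (pbang P).

Inductive cre :=
  | ceps : cre
  | csym : sym -> cre
  | ccat : cre -> cre -> cre
  | cshuf : cre -> cre -> cre
  | cstar : cre -> cre.

(* L1 (.) L2 = { x1 y1 ... xn yn | x1...xn in L1, y1...yn in L2 },
   components possibly empty. *)
Definition shuffle (L1 L2 : word -> Prop) (w : word) : Prop :=
  exists xs ys : seq word,
    size xs = size ys /\ L1 (flatten xs) /\ L2 (flatten ys) /\
    w = flatten [seq p.1 ++ p.2 | p <- zip xs ys].

Fixpoint lang (e : cre) : word -> Prop :=
  match e with
  | ceps => fun w => w = [::]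
  | csym a => fun w => w = [:: a]
  | ccat e1 e2 => fun w => exists x1 x2, w = x1 ++ x2 /\ lang e1 x1 /\ lang e2 x2
  | cshuf e1 e2 => shuffle (lang e1) (lang e2)
  | cstar e1 => fun w =>
      exists i : nat, iter i (fun L => shuffle L (lang e1)) (fun v => v = [::]) w
  end.

Fixpoint CRE (P : proc) : cre :=
  match P with
  | pnil => ceps
  | pact a P' => ccat (csym (inl a)) (CRE P')
  | pgo _ l _ => csym (inr l)
  | ppar P1 P2 => cshuf (CRE P1) (CRE P2)
  | pbang P' => cstar (CRE P')
  end.

(* every go-subterm  go_{A'} l.Q  of P satisfies lang(CRE Q) <= Acp(A');
   since subterms of subterms are subterms, this unfolds the recursive
   requirement "|- Q : A' for every subterm go_{A'} l.Q of P". *)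
Definition go_subterms_ok (P : proc) : Prop :=
  forall A' l Q, subterm (pgo A' l Q) P ->
    forall w, lang (CRE Q) w -> Acp A' w.

Definition wt (P : proc) (A : dfa) : Prop :=
  (forall w, lang (CRE P) w -> Acp A w) /\ go_subterms_ok P.

Inductive trust := tloc | lgood | lbad.

Definition trust_le (t t' : trust) : Prop :=
  t = t' \/ (t = tloc /\ (t' = lbad \/ t' = lgood)).

Record membrane := Membrane {
  mtrust : Loc -> option trust;
  mpol   : dfa
}.

Inductive system :=
  | s0 : system
  | ssite : Loc -> membrane -> proc -> system
  | spar : system -> system -> system.

Fixpoint sites (N : system) : list (Loc * membrane * proc) :=
  match N with
  | s0 => nil
  | ssite l M P => (l, M, P) :: nil
  | spar N1 N2 => sites N1 ++ sites N2
  end.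

Definition distinct_names (N : system) : Prop :=
  List.NoDup (List.map (fun x => fst (fst x)) (sites N)).

Definition policies_ok (N : system) : Prop :=
  forall l M P, List.In (l, M, P) (sites N) ->
    is_policy (mpol M) /\
    (forall A' h Q, subterm (pgo A' h Q) P -> is_policy A').

Inductive peq : proc -> proc -> Prop :=
  | peq_refl P : peq P P
  | peq_sym P Q : peq P Q -> peq Q P
  | peq_trans P Q R : peq P Q -> peq Q R -> peq P R
  | peq_act a P Q : peq P Q -> peq (pact a P) (pact a Q)
  | peq_go A l P Q : peq P Q -> peq (pgo A l P) (pgo A l Q)
  | peq_par P P' Q Q' : peq P P' -> peq Q Q' -> peq (ppar P Q) (ppar P' Q')
  | peq_bang P Q : peq P Q -> peq (pbang P) (pbang Q)
  | peq_comm P Q : peq (ppar P Q) (ppar Q P)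
  | peq_assoc P Q R : peq (ppar (ppar P Q) R) (ppar P (ppar Q R))
  | peq_unit P : peq (ppar P pnil) P.

Inductive seqv : system -> system -> Prop :=
  | seqv_refl N : seqv N N
  | seqv_sym N1 N2 : seqv N1 N2 -> seqv N2 N1
  | seqv_trans N1 N2 N3 : seqv N1 N2 -> seqv N2 N3 -> seqv N1 N3
  | seqv_par N1 N1' N2 N2' : seqv N1 N1' -> seqv N2 N2' -> seqv (spar N1 N2) (spar N1' N2')
  | seqv_site l M P Q : peq P Q -> seqv (ssite l M P) (ssite l M Q)
  | seqv_bang l M P Q :
      seqv (ssite l M (ppar (pbang P) Q)) (ssite l M (ppar P (ppar (pbang P) Q)))
  | seqv_comm N1 N2 : seqv (spar N1 N2) (spar N2 N1)
  | seqv_assoc N1 N2 N3 : seqv (spar (spar N1 N2) N3) (spar N1 (spar N2 N3))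
  | seqv_unit N : seqv (spar N s0) N.

Definition mig_ok (k : Loc) (Ml : membrane) (A : dfa) (P : proc) : Prop :=
  if mtrust Ml k is Some lgood then enforces A (mpol Ml) else wt P (mpol Ml).

Inductive red : system -> system -> Prop :=
  | red_act l M a P Q : red (ssite l M (ppar (pact a P) Q)) (ssite l M (ppar P Q))
  | red_par N1 N1' N2 : red N1 N1' -> red (spar N1 N2) (spar N1' N2)
  | red_struct N N1 N1' N' : seqv N N1 -> red N1 N1' -> seqv N1' N' -> red N N'
  | red_mig k Mk A l P Q Ml R :
      mig_ok k Ml A P ->
      red (spar (ssite k Mk (ppar (pgo A l P) Q)) (ssite l Ml R))
          (spar (ssite k Mk Q) (ssite l Ml (ppar P R))).

Definition trustworthy (N : system) (k : Loc) : Prop :=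
  exists M P, List.In (k, M, P) (sites N) /\ mtrust M k = Some lgood.

Definition coherent (N : system) : Prop :=
  forall k Mk Pk l Ml Pl t,
    List.In (k, Mk, Pk) (sites N) -> mtrust Mk k = Some lgood ->
    List.In (l, Ml, Pl) (sites N) -> mtrust Mk l = Some t ->
    exists t', mtrust Ml l = Some t' /\ trust_le t t'.

Fixpoint threads (P : proc) : list proc :=
  match P with
  | ppar P1 P2 => threads P1 ++ threads P2
  | _ => P :: nil
  end.

Definition site_ok (l : Loc) (M : membrane) (P : proc) : Prop :=
  mtrust M l = Some lgood ->
  forall T, List.In T (threads P) ->
    (exists s : dstate (mpol M), forall w, lang (CRE T) w -> Acp_s s w)
    /\ go_subterms_ok T.

Fixpoint ok (N : system) : Prop :=
  match N with
  | s0 => True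
  | ssite l M P => site_ok l M P
  | spar N1 N2 => ok N1 /\ ok N2
  end.

End Calculus.

(* Main.v *)
Require Import Defs.
From mathcomp Require Import all_boot.
From Stdlib Require List.

Set Implicit Arguments.
Unset Strict Implicit.
Section Proofs.
Variables Act Loc : Type.
Notation word := (word Act Loc).
Notation proc := (proc Act Loc).
Notation system := (system Act Loc).

Inductive il : word -> word -> word -> Prop :=
| il_nil : il [::] [::] [::]
| il_l a x y w : il x y w -> il (a::x) y (a::w)
| il_r a x y w : il x y w -> il x (a::y) (a::w).

Lemma il_lonly x : il x [::] x.
Proof. induction x; constructor; auto. Qed.
Lemma il_ronly y : il [::] y y.
Proof. induction y; constructor; auto. Qed.

Lemma il_app x y w x' y' w' : il x y w -> il x' y' w' -> il (x++x') (y++y') (w++w').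
Proof. intros H H'; induction H; simpl; try constructor; auto. Qed.

Lemma il_cat x y : il x y (x ++ y).
Proof. have := il_app (il_lonly x) (il_ronly y). by rewrite cats0. Qed.
Lemma il_cat' x y : il x y (y ++ x).
Proof. have := il_app (il_ronly y) (il_lonly x). by rewrite cats0. Qed.

Lemma il_comm x y w : il x y w -> il y x w.
Proof. intros H; induction H; constructor; auto. Qed.

Lemma il_assoc z u w : il u z w -> forall x y, il x y u -> exists v, il y z v /\ il x v w.
Proof.
  intros H; induction H; intros x0 y0 H1.
  - inversion H1; subst. exists [::]; split; constructor.
  - inversion H1; subst.
    + destruct (IHil _ _ H4) as [v [Hv1 Hv2]]. exists v; split; auto. constructor; auto.
    + destruct (IHil _ _ H4) as [v [Hv1 Hv2]]. exists (a::v); split; constructor; auto.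
  - destruct (IHil _ _ H1) as [v [Hv1 Hv2]]. exists (a::v); split; constructor; auto.
Qed.

Lemma flatten_il (xs ys : seq word) : size xs = size ys ->
  il (flatten xs) (flatten ys) (flatten [seq p.1 ++ p.2 | p <- zip xs ys]).
Proof.
  revert ys; induction xs as [|x xs IH]; intros [|y ys] Hs; simpl in *; try discriminate.
  - constructor.
  - apply il_app; [apply il_cat| apply IH; congruence].
Qed.

Lemma il_flatten x y w : il x y w -> exists xs ys : seq word, size xs = size ys /\
  flatten xs = x /\ flatten ys = y /\ w = flatten [seq p.1 ++ p.2 | p <- zip xs ys].
Proof.
  intros H; induction H.
  - exists [::], [::]; auto.
  - destruct IHil as [xs [ys [H1 [H2 [H3 H4]]]]].
    exists ([:: a] :: xs), ([::] :: ys); simpl; subst; repeat split; auto.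
  - destruct IHil as [xs [ys [H1 [H2 [H3 H4]]]]].
    exists ([::] :: xs), ([:: a] :: ys); simpl; subst; repeat split; auto.
Qed.

Lemma shuffle_il (L1 L2 : word -> Prop) w :
  shuffle L1 L2 w <-> exists x y, L1 x /\ L2 y /\ il x y w.
Proof.
  split.
  - intros [xs [ys [Hs [H1 [H2 ->]]]]]. exists (flatten xs), (flatten ys).
    repeat split; auto. by apply flatten_il.
  - intros [x [y [H1 [H2 H]]]]. destruct (il_flatten H) as [xs [ys [A [B [C D]]]]].
    exists xs, ys; subst; auto.
Qed.

Lemma shuffle_mono (L1 L2 L1' L2' : word -> Prop) :
  (forall w, L1 w -> L1' w) -> (forall w, L2 w -> L2' w) ->
  forall w, shuffle L1 L2 w -> shuffle L1' L2' w.
Proof.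
  intros H1 H2 w [xs [ys [Hs [A [B C]]]]]. exists xs, ys; auto.
Qed.

Lemma shuffle_comm (L1 L2 : word -> Prop) w : shuffle L1 L2 w -> shuffle L2 L1 w.
Proof.
  rewrite !shuffle_il. intros [x [y [A [B C]]]]. exists y, x; auto using il_comm.
Qed.

Lemma shuffle_assoc (L1 L2 L3 : word -> Prop) w :
  shuffle (shuffle L1 L2) L3 w -> shuffle L1 (shuffle L2 L3) w.
Proof.
  rewrite !shuffle_il. intros [u [z [A [B C]]]].
  rewrite shuffle_il in A. destruct A as [x [y [A1 [A2 A3]]]].
  destruct (il_assoc C A3) as [v [V1 V2]].
  exists x, v; repeat split; auto. rewrite shuffle_il. exists y, z; auto.
Qed.

Lemma shuffle_assoc' (L1 L2 L3 : word -> Prop) w :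
  shuffle L1 (shuffle L2 L3) w -> shuffle (shuffle L1 L2) L3 w.
Proof.
  intros H. apply shuffle_comm. apply shuffle_assoc. apply shuffle_comm.
  apply shuffle_assoc. apply shuffle_comm.
  revert w H. apply shuffle_mono; auto.
Qed.

Lemma shuffle_unit (L : word -> Prop) w : shuffle L (fun v => v = [::]) w <-> L w.
Proof.
  rewrite shuffle_il. split.
  - intros [x [y [A [B C]]]]. subst.
    enough (x = w) by (subst; auto).
    clear A. remember [::] as e. induction C; subst; try discriminate; auto.
    f_equal; auto.
  - intros H. exists w, [::]; repeat split; auto using il_lonly.
Qed.

Definition ceq (e1 e2 : cre Act Loc) := forall w, lang e1 w <-> lang e2 w.

Lemma iter_mono (L L' : word -> Prop) : (forall w, L w -> L' w) ->
  forall i w, iter i (fun L0 => shuffle L0 L) (fun v => v = [::]) w ->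
              iter i (fun L0 => shuffle L0 L') (fun v => v = [::]) w.
Proof.
  intros H i; induction i; simpl; auto.
  apply shuffle_mono; auto.
Qed.

Lemma peq_ceq P Q : peq P Q -> ceq (CRE P) (CRE Q).
Proof.
  intros H; induction H; simpl; intro w.
  - tauto.
  - symmetry; apply IHpeq.
  - rewrite IHpeq1; apply IHpeq2.
  - split; intros [x1 [x2 [A [B C]]]]; exists x1, x2; repeat split; auto; apply IHpeq; auto.
  - tauto.
  - split; apply shuffle_mono; intros v; try apply IHpeq1; try apply IHpeq2.
  - split; intros [i Hi]; exists i; revert Hi; apply iter_mono; intros v; apply IHpeq.
  - split; apply shuffle_comm.
  - split; [apply shuffle_assoc|apply shuffle_assoc'].
  - apply shuffle_unit.
Qed.


Lemma ceq_refl e : ceq e e. Proof. intro; tauto. Qed.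
Lemma ceq_sym e1 e2 : ceq e1 e2 -> ceq e2 e1. Proof. intros H w; symmetry; apply H. Qed.
Lemma ceq_trans e1 e2 e3 : ceq e1 e2 -> ceq e2 e3 -> ceq e1 e3.
Proof. intros H1 H2 w; rewrite H1; apply H2. Qed.

Definition gsim (P Q : proc) := forall A l R, subterm (pgo A l R) Q ->
  exists R', subterm (pgo A l R') P /\ ceq (CRE R') (CRE R).

Lemma peq_gsim P Q : peq P Q -> gsim P Q /\ gsim Q P.
Proof.
  intros H; induction H; split; intros A0 l0 R0 Hs.
  all: try (exists R0; split; [exact Hs| apply ceq_refl]; fail).
  - apply IHpeq; auto.
  - apply IHpeq; auto.
  - destruct (proj1 IHpeq2 _ _ _ Hs) as [R1 [HH1 E1]].
    destruct (proj1 IHpeq1 _ _ _ ltac:(eassumption)) as [R2 [H2 E2]].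
    exists R2; split; auto; eapply ceq_trans; eauto.
  - destruct (proj2 IHpeq1 _ _ _ Hs) as [R1 [HH1 E1]].
    destruct (proj2 IHpeq2 _ _ _ ltac:(eassumption)) as [R2 [H2 E2]].
    exists R2; split; auto; eapply ceq_trans; eauto.
  - inversion Hs; subst. destruct (proj1 IHpeq _ _ _ ltac:(eassumption)) as [R1 [HH1 E1]].
    exists R1; split; auto; constructor; auto.
  - inversion Hs; subst. destruct (proj2 IHpeq _ _ _ ltac:(eassumption)) as [R1 [HH1 E1]].
    exists R1; split; auto; constructor; auto.
  - inversion Hs; subst.
    + exists P; split; [constructor| apply peq_ceq; auto].
    + destruct (proj1 IHpeq _ _ _ ltac:(eassumption)) as [R1 [HH1 E1]].
      exists R1; split; auto; constructor; auto.
  - inversion Hs; subst.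
    + exists Q; split; [constructor| apply ceq_sym, peq_ceq; auto].
    + destruct (proj2 IHpeq _ _ _ ltac:(eassumption)) as [R1 [HH1 E1]].
      exists R1; split; auto; constructor; auto.
  - inversion Hs; subst.
    + destruct (proj1 IHpeq1 _ _ _ ltac:(eassumption)) as [R1 [HH1 E1]].
      exists R1; split; auto; apply sub_parl; auto.
    + destruct (proj1 IHpeq2 _ _ _ ltac:(eassumption)) as [R1 [HH1 E1]].
      exists R1; split; auto; apply sub_parr; auto.
  - inversion Hs; subst.
    + destruct (proj2 IHpeq1 _ _ _ ltac:(eassumption)) as [R1 [HH1 E1]].
      exists R1; split; auto; apply sub_parl; auto.
    + destruct (proj2 IHpeq2 _ _ _ ltac:(eassumption)) as [R1 [HH1 E1]].
      exists R1; split; auto; apply sub_parr; auto.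
  - inversion Hs; subst. destruct (proj1 IHpeq _ _ _ ltac:(eassumption)) as [R1 [HH1 E1]].
    exists R1; split; auto; constructor; auto.
  - inversion Hs; subst. destruct (proj2 IHpeq _ _ _ ltac:(eassumption)) as [R1 [HH1 E1]].
    exists R1; split; auto; constructor; auto.
  - exists R0; split; [|apply ceq_refl]. inversion Hs; subst.
    + apply sub_parr; auto.
    + apply sub_parl; auto.
  - exists R0; split; [|apply ceq_refl]. inversion Hs; subst.
    + apply sub_parr; auto.
    + apply sub_parl; auto.
  - exists R0; split; [|apply ceq_refl]. inversion Hs as [|? ? Hq|? ? ? Hq|? ? Hq|? ? Hq|? Hq]; subst.
    + apply sub_parl; apply sub_parl; auto.
    + inversion Hq; subst.
      * apply sub_parl; apply sub_parr; auto.
      * apply sub_parr; auto.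
  - exists R0; split; [|apply ceq_refl]. inversion Hs as [|? ? Hq|? ? ? Hq|? ? Hq|? ? Hq|? Hq]; subst.
    + inversion Hq; subst.
      * apply sub_parl; auto.
      * apply sub_parr; apply sub_parl; auto.
    + apply sub_parr; apply sub_parr; auto.
  - exists R0; split; [|apply ceq_refl]. apply sub_parl; auto.
  - exists R0; split; [|apply ceq_refl]. inversion Hs as [|? ? Hq|? ? ? Hq|? ? Hq|? ? Hq|? Hq]; subst; auto.
    inversion Hq.
Qed.

Lemma go_ok_gsim P Q : go_subterms_ok P -> gsim P Q -> go_subterms_ok Q.
Proof.
  intros H G A l R Hs w Hw. destruct (G _ _ _ Hs) as [R' [H1 E]].
  apply (H _ _ _ ltac:(eassumption)). apply E; auto.
Qed.

Lemma subterm_trans (T U V : proc) : subterm T U -> subterm U V -> subterm T V.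
Proof. intros H1 H2; induction H2; [exact H1|apply sub_act|apply sub_go|apply sub_parl|apply sub_parr|apply sub_bang]; auto. Qed.

Lemma in_cat_iff (X : Type) (x : X) s1 s2 : List.In x (s1 ++ s2) <-> List.In x s1 \/ List.In x s2.
Proof. induction s1; simpl; tauto. Qed.

Definition thr_ok (M : membrane Act Loc) (T : proc) :=
  (exists s : dstate (mpol M), forall w, lang (CRE T) w -> Acp_s s w) /\ go_subterms_ok T.
Definition pok M (P : proc) := forall T, List.In T (threads P) -> thr_ok M T.

Lemma pok_par M P Q : pok M (ppar P Q) <-> pok M P /\ pok M Q.
Proof.
  unfold pok; simpl. split.
  - intros H; split; intros T HT; apply H; apply in_cat_iff; auto.
  - intros [H1 H2] T HT; apply in_cat_iff in HT; destruct HT; auto.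
Qed.

Lemma pok_single M P : threads P = [:: P] -> (pok M P <-> thr_ok M P).
Proof.
  unfold pok; intros ->; simpl. split.
  - intros H; apply H; auto.
  - intros H T [<-|[]]; auto.
Qed.

Lemma thr_ok_peq M P Q : peq P Q -> thr_ok M P -> thr_ok M Q.
Proof.
  intros H [[s Hs] G]. split.
  - exists s; intros w Hw; apply Hs; apply (peq_ceq H); auto.
  - eapply go_ok_gsim; eauto. apply (peq_gsim H).
Qed.

Lemma pok_peq M P Q : peq P Q -> (exists s : dstate (mpol M), dfinal s) ->
  (pok M P <-> pok M Q).
Proof.
  intros H Hf; induction H.
  - tauto.
  - tauto.
  - tauto.
  - rewrite !pok_single //. split; apply thr_ok_peq; [apply peq_act|apply peq_act, peq_sym]; auto.
  - rewrite !pok_single //. split; apply thr_ok_peq; [apply peq_go|apply peq_go, peq_sym]; auto.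
  - rewrite !pok_par. tauto.
  - rewrite !pok_single //. split; apply thr_ok_peq; [apply peq_bang|apply peq_bang, peq_sym]; auto.
  - rewrite !pok_par. tauto.
  - rewrite !pok_par. tauto.
  - rewrite pok_par. enough (pok M (pnil Act Loc)) by tauto.
    rewrite pok_single //. destruct Hf as [s Hs]. split.
    + exists s; intros w Hw; simpl in Hw; subst. split; simpl; auto.
      intros x [].
    + intros A l R Hsub; inversion Hsub.
Qed.

Lemma lang_ne (e : cre Act Loc) : exists w, lang e w.
Proof.
  induction e; simpl.
  - eauto.
  - eauto.
  - destruct IHe1 as [x1 H1], IHe2 as [x2 H2]. exists (x1 ++ x2), x1, x2; auto.
  - destruct IHe1 as [x1 H1], IHe2 as [x2 H2]. exists (x1 ++ x2).
    apply shuffle_il. exists x1, x2; repeat split; auto using il_cat.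
  - exists [::], 0; simpl; auto.
Qed.

Lemma thread_ext (P T : proc) : List.In T (threads P) ->
  subterm T P /\ exists y, forall x, lang (CRE T) x -> lang (CRE P) (y ++ x).
Proof.
  induction P; simpl; try (intros [<-|[]]; split; [constructor| exists [::]; auto]).
  intros HT; apply in_cat_iff in HT; destruct HT as [HT|HT].
  - destruct (IHP1 HT) as [S [y Hy]]. split; [apply sub_parl; auto|].
    destruct (lang_ne (CRE P2)) as [y2 H2]. exists (y2 ++ y); intros x Hx.
    apply shuffle_il. exists (y ++ x), y2; repeat split; auto.
    rewrite -catA. apply il_cat'.
  - destruct (IHP2 HT) as [S [y Hy]]. split; [apply sub_parr; auto|].
    destruct (lang_ne (CRE P1)) as [y1 H1]. exists (y1 ++ y); intros x Hx.
    apply shuffle_il. exists y1, (y ++ x); repeat split; auto.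
    rewrite -catA. apply il_cat.
Qed.

Lemma Acp_s_cat (A : dfa Act Loc) (s : dstate A) y x :
  Acp_s s (y ++ x) -> Acp_s (foldl (@dtrans _ _ A) s y) x.
Proof.
  intros [H1 H2]. split.
  - intros z Hz; apply H1; apply in_cat_iff; auto.
  - by rewrite -foldl_cat.
Qed.

Lemma split_ok M P (s : dstate (mpol M)) :
  (forall w, lang (CRE P) w -> Acp_s s w) -> go_subterms_ok P -> pok M P.
Proof.
  intros H G T HT. destruct (thread_ext HT) as [S [y Hy]]. split.
  - exists (foldl (@dtrans _ _ (mpol M)) s y). intros x Hx.
    apply Acp_s_cat; apply H; apply Hy; auto.
  - intros A l R Hs. apply (G A l R). eapply subterm_trans; eauto.
Qed.


Definition skf (N1 N2 : system) := forall l M P, List.In (l, M, P) (sites N1) ->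
  exists P', List.In (l, M, P') (sites N2).

Lemma skf_refl N : skf N N. Proof. intros l M P H; eauto. Qed.
Lemma skf_trans N1 N2 N3 : skf N1 N2 -> skf N2 N3 -> skf N1 N3.
Proof. intros H1 H2 l M P H. destruct (H1 _ _ _ H) as [P' H']. eauto. Qed.
Lemma skf_incl N1 N2 : (forall x, List.In x (sites N1) -> List.In x (sites N2)) -> skf N1 N2.
Proof. intros H l M P Hi; eauto. Qed.

Lemma seqv_sk N1 N2 : seqv N1 N2 -> skf N1 N2 /\ skf N2 N1.
Proof.
  intros H; induction H.
  - split; apply skf_refl.
  - tauto.
  - split; eapply skf_trans; try apply IHseqv1; apply IHseqv2.
  - split; intros l M P; simpl; rewrite in_cat_iff; intros [Hi|Hi].
    all: try (destruct (proj1 IHseqv1 _ _ _ Hi) as [P' Hp]; exists P'; apply in_cat_iff; auto; fail).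
    all: try (destruct (proj1 IHseqv2 _ _ _ Hi) as [P' Hp]; exists P'; apply in_cat_iff; auto; fail).
    all: try (destruct (proj2 IHseqv1 _ _ _ Hi) as [P' Hp]; exists P'; apply in_cat_iff; auto; fail).
    all: try (destruct (proj2 IHseqv2 _ _ _ Hi) as [P' Hp]; exists P'; apply in_cat_iff; auto; fail).
  - split; intros l0 M0 P0; simpl; intros [Hi|[]]; inversion Hi; subst; eauto.
  - split; intros l0 M0 P0; simpl; intros [Hi|[]]; inversion Hi; subst; eauto.
  - split; apply skf_incl; intros x; simpl; rewrite !in_cat_iff; tauto.
  - split; apply skf_incl; intros x; simpl; rewrite !in_cat_iff; tauto.
  - split; apply skf_incl; intros x; simpl; rewrite !in_cat_iff; simpl; tauto.
Qed.

Definition hasfin (N : system) := forall l M P, List.In (l, M, P) (sites N) ->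
  exists s : dstate (mpol M), dfinal s.

Lemma hasfin_sk N1 N2 : hasfin N2 -> skf N1 N2 -> hasfin N1.
Proof. intros H S l M P Hi. destruct (S _ _ _ Hi) as [P' H']. eauto. Qed.

Lemma coherent_sk N1 N2 : coherent N2 -> skf N1 N2 -> coherent N1.
Proof.
  intros H S k Mk Pk l Ml Pl t H1 H2 H3 H4.
  destruct (S _ _ _ H1) as [P1 H1']. destruct (S _ _ _ H3) as [P3 H3']. eauto.
Qed.

Lemma site_ok_pok l M (P : proc) : site_ok l M P = (mtrust M l = Some lgood -> pok M P).
Proof. reflexivity. Qed.

Lemma seqv_ok N1 N2 : seqv N1 N2 -> hasfin N1 -> (ok N1 <-> ok N2).
Proof.
  intros H; induction H; intros Hf.
  - tauto.
  - symmetry; apply IHseqv. eapply hasfin_sk; eauto. apply (seqv_sk H).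
  - rewrite IHseqv1 //. apply IHseqv2. eapply hasfin_sk; eauto. apply (seqv_sk H).
  - simpl. rewrite IHseqv1 ?IHseqv2; [tauto| |];
      eapply hasfin_sk; eauto; apply skf_incl; intros x Hx; simpl; apply in_cat_iff; auto.
  - simpl; rewrite !site_ok_pok. rewrite (@pok_peq M P Q H); [tauto|].
    apply (Hf l M P); simpl; auto.
  - simpl; rewrite !site_ok_pok. split; intros Hs Ht; specialize (Hs Ht);
      rewrite !pok_par in Hs |- *; try tauto.
    destruct Hs as [Hb Hq]. split; [|tauto].
    apply pok_single in Hb; [|reflexivity]. destruct Hb as [[s Hs] G].
    apply (@split_ok M P s).
    + intros w Hw; apply Hs; simpl. exists 1; simpl.
      apply shuffle_comm, shuffle_unit; auto.
    + intros A' h Q' Hsub; apply (G A' h Q'); apply sub_bang; auto.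
  - simpl; tauto.
  - simpl; tauto.
  - simpl; tauto.
Qed.

Lemma red_sk N N' : red N N' -> skf N N' /\ skf N' N.
Proof.
  intros H; induction H.
  - split; intros l0 M0 P0; simpl; intros [Hi|[]]; inversion Hi; subst; eauto.
  - split; intros l M P; simpl; rewrite in_cat_iff; intros [Hi|Hi].
    all: try (destruct (proj1 IHred _ _ _ Hi) as [P' Hp]; exists P'; apply in_cat_iff; auto; fail).
    all: try (destruct (proj2 IHred _ _ _ Hi) as [P' Hp]; exists P'; apply in_cat_iff; auto; fail).
    all: try (eexists; apply in_cat_iff; right; exact Hi).
  - destruct (seqv_sk H) as [A1 A2], (seqv_sk H1) as [A3 A4], IHred as [A5 A6]. split; [apply (skf_trans A1); apply (skf_trans A5); exact A3 | apply (skf_trans A4); apply (skf_trans A6); exact A2].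
  - split; intros l0 M0 P0; simpl; intros [Hi|[Hi|[]]]; inversion Hi; subst; eexists; simpl; eauto.
Qed.

Lemma red_ok N N' : red N N' -> hasfin N -> coherent N -> ok N -> ok N'.
Proof.
  intros H; induction H; intros Hf Hc Hok.
  - cbn [ok] in *; rewrite site_ok_pok in Hok |- *. intros Ht; specialize (Hok Ht).
    rewrite pok_par in Hok. apply/pok_par. destruct Hok as [Ha Hq]; split; auto.
    apply pok_single in Ha; [|reflexivity]. destruct Ha as [[s Hs] G].
    apply (@split_ok M P (dtrans s (inl a))).
    + intros w Hw. apply (@Acp_s_cat _ s [:: inl a]). apply Hs; simpl.
      exists [:: inl a], w; auto.
    + intros A' h Q' Hsub; apply (G A' h Q'); apply sub_act; auto.
  - cbn [ok] in *. destruct Hok; split; auto. apply IHred; auto.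
    + eapply hasfin_sk; eauto; apply skf_incl; intros x Hx; simpl; apply in_cat_iff; auto.
    + eapply coherent_sk; eauto; apply skf_incl; intros x Hx; simpl; apply in_cat_iff; auto.
  - destruct (seqv_sk H) as [S1 S2]. destruct (red_sk H0) as [S3 S4].
    assert (Hf1 : hasfin N1) by (eapply hasfin_sk; eauto).
    assert (Hf2 : hasfin N1') by (apply (hasfin_sk Hf1 S4)).
    apply (proj1 (seqv_ok H1 Hf2)).
    apply IHred; auto.
    + eapply coherent_sk; eauto.
    + apply (proj1 (seqv_ok H Hf)); auto.
  - cbn [ok] in *. destruct Hok as [Hk Hl]. rewrite !site_ok_pok in Hk Hl |- *.
    split.
    + intros Ht; specialize (Hk Ht); rewrite pok_par in Hk; tauto.
    + intros Ht. apply/pok_par; split; [|exact (Hl Ht)].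
      unfold mig_ok in H.
      assert (Hgo : (mtrust Ml k = Some lgood) ->
                    (forall w, lang (CRE P) w -> Acp A w) /\ go_subterms_ok P).
      { intros Hmk.
        destruct (Hc l Ml R k Mk (ppar (pgo A l P) Q) lgood) as [t' [E1 E2]]; simpl; auto.
        assert (t' = lgood) by (destruct E2 as [->|[? _]]; [auto|discriminate]). subst.
        specialize (Hk E1). rewrite pok_par in Hk. destruct Hk as [Hk _].
        apply pok_single in Hk; [|reflexivity]. destruct Hk as [_ G].
        split.
        - apply (G A l P); constructor.
        - intros A' h Q' Hsub; apply (G A' h Q'); apply sub_go; auto. }
      destruct (mtrust Ml k) as [[| |]|] eqn:E.
      * destruct H as [H1 H2]. apply (@split_ok Ml P (dstart (mpol Ml))); auto.
      * destruct (Hgo erefl) as [H1 H2].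
        apply (@split_ok Ml P (dstart (mpol Ml))); auto. intros w Hw; apply H; apply H1; auto.
      * destruct H as [H1 H2]. apply (@split_ok Ml P (dstart (mpol Ml))); auto.
      * destruct H as [H1 H2]. apply (@split_ok Ml P (dstart (mpol Ml))); auto.
Qed.

End Proofs.

Theorem mainTheorem7 (Act Loc : Type) (N N' : system Act Loc) :
  distinct_names N -> policies_ok N ->
  coherent N -> ok N ->
  red N N' ->
  coherent N' /\ ok N'.
Proof.
  intros _ Hp Hc Hok Hr. split.
  - eapply coherent_sk; eauto. apply (red_sk Hr).
  - eapply red_ok; eauto. intros l M P Hi. apply (Hp l M P Hi).
Qed.
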